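(* Let $n,m,p,N\in\mathbb{N}_+$, $B\in\mathbb{R}^{n\times m}$, $C\in\mathbb{R}^{p\times n}$ of full column rank, $x_0\in\mathbb{R}^n$, $r_1,\dots,r_N\in\mathbb{R}^p$, $r_0:=Cx_0$, $\lambda_1,\lambda_2,\lambda_3\ge0$, functions $f_1,f_2,f_3$, and let $\omega^{\rm c}>0$ and $\mathcal{S}\subseteq\{(A,U,\omega)\in\mathbb{R}^{n\times n}\times\mathbb{R}^{m\times N}\times\mathbb{R}_+:\omega=\omega^{\rm c}\}$. Problem (MOPUL) is: minimize $\lambda_1f_1(A)+\lambda_2f_2(U)+\lambda_3f_3(\omega)$ over $(A,U,\omega)$, $U=(u_0,\dots,u_{N-1})$, subject to $x_t=Ax_{t-1}+Bu_{t-1}$ ($t=1,\dots,N$), $y_t=Cx_t$ ($t=0,\dots,N$), $\sum_{t=1}^N\|y_t-r_t\|_2\le\omega$, $(A,U,\omega)\in\mathcal{S}$. Let $\beta>0$ and consider the modified approximation problem (AMOPUL$_\beta$): minimize the same objective over $(A,U,\omega)$ subject to $\sum_{t=1}^N\|CAC^{\dagger}r_{t-1}+CBu_{t-1}-r_t\|_2\le\omega^{\rm c}/\big(\sum_{i=0}^{N-1}\beta^i\big)$ and $(A,U,\omega)\in\mathcal{S}$. If $\|CA^{\rm a}C^{\dagger}\|_2\le\beta$ for every feasible $A^{\rm a}$ of (AMOPUL$_\beta$), then every feasible solution $(A^{\rm a},U^{\rm a})$ (with $\omega=\omega^{\rm c}$) of (AMOPUL$_\beta$) is feasible for (MOPUL),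 and the optimal objective value of (AMOPUL$_\beta$) is an upper bound for the optimal objective value of (MOPUL).
   Context: $C^{\dagger}$ is the Moore–Penrose inverse of $C$; $\|\cdot\|_2$ is the Euclidean norm for vectors and the spectral norm for matrices. In the paper $f_1,f_2,f_3$ and $\mathcal{S}$ are assumed SD representable, though this is not used in the claim. *)

(* Defs.v *)
From mathcomp Require Import all_boot all_order all_algebra.
From mathcomp Require Import all_classical all_reals ereal.
Set Implicit Arguments. Unset Strict Implicit. Unset Printing Implicit Defensive.
Import Order.TTheory GRing.Theory Num.Theory.
Local Open Scope ring_scope.
Local Open Scope classical_set_scope.

Definition enorm (R : realType) (k : nat) (v : 'cV[R]_k) : R :=
  Num.sqrt (\sum_(i < k) v i 0 ^+ 2).

Definition specnorm (R : realType) (p q : nat) (M : 'M[R]_(p, q)) : R :=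
  sup [set enorm (M *m x) | x in [set x : 'cV[R]_q | enorm x <= 1]].

Definition is_MP_inverse (R : realType) (p n : nat)
    (C : 'M[R]_(p, n)) (Cd : 'M[R]_(n, p)) : Prop :=
  [/\ C *m Cd *m C = C, Cd *m C *m Cd = Cd,
      (C *m Cd)^T = C *m Cd & (Cd *m C)^T = Cd *m C].

(* column u_t of U = (u_0, ..., u_{N-1}); 0 outside the range (never used) *)
Definition ucol (R : realType) (m N : nat) (U : 'M[R]_(m, N)) (t : nat) : 'cV[R]_m :=
  match @insub _ (fun t => t < N)%N 'I_N t with Some j => col j U | None => 0 end.

Fixpoint traj (R : realType) (n m N : nat) (A : 'M[R]_n) (B : 'M[R]_(n, m))
    (U : 'M[R]_(m, N)) (x0 : 'cV[R]_n) (t : nat) : 'cV[R]_n :=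
  match t with
  | 0 => x0
  | t'.+1 => A *m traj A B U x0 t' + B *m ucol U t'
  end.

Definition dec (R : realType) (n m N : nat) := ('M[R]_n * 'M[R]_(m, N) * R)%type.

Definition MOPUL_feas (R : realType) (n m p N : nat) (B : 'M[R]_(n, m))
    (C : 'M[R]_(p, n)) (x0 : 'cV[R]_n) (r : nat -> 'cV[R]_p)
    (S : set (dec R n m N)) : set (dec R n m N) :=
  fun z => let: (A, U, om) := z in
    \sum_(1 <= t < N.+1) enorm (C *m traj A B U x0 t - r t) <= om /\ S z.

Definition AMOPUL_feas (R : realType) (n m p N : nat) (B : 'M[R]_(n, m))
    (C : 'M[R]_(p, n)) (Cd : 'M[R]_(n, p)) (r : nat -> 'cV[R]_p)
    (omc beta : R) (S : set (dec R n m N)) : set (dec R n m N) :=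
  fun z => let: (A, U, om) := z in
    \sum_(1 <= t < N.+1)
        enorm (C *m A *m Cd *m r t.-1 + C *m B *m ucol U t.-1 - r t)
      <= omc / (\sum_(i < N) beta ^+ i) /\ S z.

Definition objective (R : realType) (n m N : nat) (l1 l2 l3 : R)
    (f1 : 'M[R]_n -> R) (f2 : 'M[R]_(m, N) -> R) (f3 : R -> R)
    (z : dec R n m N) : R :=
  let: (A, U, om) := z in l1 * f1 A + l2 * f2 U + l3 * f3 om.

(* optimal value (infimum in the extended reals; +oo if infeasible) *)
Definition optval (R : realType) (T : Type) (obj : T -> R) (F : set T) : \bar R :=
  ereal_inf [set (obj z)%:E | z in F].

(* Main.v *)
Require Import Defs.
From mathcomp Require Import all_boot all_order all_algebra.
From mathcomp Require Import all_classical all_reals ereal.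
From mathcomp Require Import ring lra.
Set Implicit Arguments. Unset Strict Implicit.
Import Order.TTheory GRing.Theory Num.Theory.
Local Open Scope ring_scope.
Local Open Scope classical_set_scope.

Section H.
Variable R : realType.

Definition sq (k : nat) (v : 'cV[R]_k) := \sum_(i < k) v i 0 ^+ 2.

Lemma sq_ge0 k (v : 'cV[R]_k) : 0 <= sq v.
Proof. by apply: sumr_ge0 => i _; rewrite sqr_ge0. Qed.

Lemma enormE k (v : 'cV[R]_k) : enorm v = Num.sqrt (sq v).
Proof. by []. Qed.

Lemma enorm_ge0 k (v : 'cV[R]_k) : 0 <= enorm v.
Proof. exact: sqrtr_ge0. Qed.

Lemma sq_enorm k (v : 'cV[R]_k) : enorm v ^+ 2 = sq v.
Proof. by rewrite enormE sqr_sqrtr // sq_ge0. Qed.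

Lemma sq0_eq k (v : 'cV[R]_k) : sq v = 0 -> v = 0.
Proof.
move=> h; apply/matrixP => i j; rewrite ord1 mxE.
have := @psumr_eq0P _ _ xpredT (fun i => v i 0 ^+ 2) (fun i _ => sqr_ge0 (v i 0)) h i isT.
by move/eqP; rewrite sqrf_eq0 => /eqP.
Qed.

Lemma enorm0_eq k (v : 'cV[R]_k) : enorm v = 0 -> v = 0.
Proof.
move=> h; apply: sq0_eq; by rewrite -sq_enorm h expr0n.
Qed.

Lemma enormZ k (c : R) (v : 'cV[R]_k) : enorm (c *: v) = `|c| * enorm v.
Proof.
rewrite !enormE /sq.
have -> : \sum_(i < k) (c *: v) i 0 ^+ 2 = c ^+ 2 * \sum_(i < k) v i 0 ^+ 2.
  by rewrite mulr_sumr; apply: eq_bigr => i _; rewrite mxE exprMn.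
by rewrite sqrtrM ?sqr_ge0 // sqrtr_sqr.
Qed.

Lemma cs_aux k (a b : 'I_k -> R) :
  \sum_i a i * b i <= Num.sqrt (\sum_i a i ^+ 2) * Num.sqrt (\sum_i b i ^+ 2).
Proof.
set A := \sum_i a i ^+ 2; set B := \sum_i b i ^+ 2.
have A0 : 0 <= A by apply: sumr_ge0 => i _; rewrite sqr_ge0.
have B0 : 0 <= B by apply: sumr_ge0 => i _; rewrite sqr_ge0.
set sA := Num.sqrt A; set sB := Num.sqrt B.
have sA0 : 0 <= sA := sqrtr_ge0 _.
have sB0 : 0 <= sB := sqrtr_ge0 _.
have hA : sA ^+ 2 = A by rewrite sqr_sqrtr.
have hB : sB ^+ 2 = B by rewrite sqr_sqrtr.
have key : 0 <= \sum_i (a i * sB - b i * sA) ^+ 2 by apply: sumr_ge0 => i _; rewrite sqr_ge0.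
have E : \sum_i (a i * sB - b i * sA) ^+ 2 = sB^+2 * A - 2 * (sA * sB) * (\sum_i a i * b i) + sA^+2 * B.
  rewrite /A /B !mulr_sumr -sumrN -!big_split /=; apply: eq_bigr => i _.
  ring.
rewrite E hA hB in key.
have [eA|sApos] := eqVneq sA 0.
  have A00 : A = 0 by rewrite -hA eA expr0n.
  rewrite eA.
  have ai : forall i, a i = 0.
    move=> i; have := @psumr_eq0P _ _ xpredT (fun i => a i ^+ 2) (fun i _ => sqr_ge0 (a i)) A00 i isT.
    by move/eqP; rewrite sqrf_eq0 => /eqP.
  by rewrite mul0r big1 // => i _; rewrite ai mul0r.
have [eB|sBpos] := eqVneq sB 0.
  have B00 : B = 0 by rewrite -hB eB expr0n.
  rewrite eB.
  have bi : forall i, b i = 0.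
    move=> i; have := @psumr_eq0P _ _ xpredT (fun i => b i ^+ 2) (fun i _ => sqr_ge0 (b i)) B00 i isT.
    by move/eqP; rewrite sqrf_eq0 => /eqP.
  by rewrite mulr0 big1 // => i _; rewrite bi mulr0.
have P : 0 < sA * sB by rewrite mulr_gt0 // lt0r ?sApos ?sBpos.
set S := \sum_i a i * b i in key *.
rewrite -hA -hB in key.
nra.
Qed.

Lemma enormD k (u v : 'cV[R]_k) : enorm (u + v) <= enorm u + enorm v.
Proof.
have h0 : 0 <= enorm u + enorm v by rewrite addr_ge0 ?enorm_ge0.
rewrite -(ger0_norm h0) -sqrtr_sqr (enormE (u + v)) ler_sqrt ?sqr_ge0 //.
have cs := cs_aux (fun i => u i 0) (fun i => v i 0).
rewrite -!enormE in cs.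
have -> : sq (u + v) = sq u + 2 * (\sum_i u i 0 * v i 0) + sq v.
  rewrite /sq mulr_sumr -!big_split /=; apply: eq_bigr => i _; rewrite mxE; ring.
rewrite -!sq_enorm; nra.
Qed.

Lemma coord_le k (x : 'cV[R]_k) j : `|x j 0| <= enorm x.
Proof.
rewrite -sqrtr_sqr enormE ler_sqrt ?sq_ge0 //.
rewrite /sq (bigD1 j) //= lerDl; apply: sumr_ge0 => i _; exact: sqr_ge0.
Qed.

Lemma spec_ub p q (M : 'M[R]_(p, q)) :
  has_sup [set enorm (M *m x) | x in [set x : 'cV[R]_q | enorm x <= 1]].
Proof.
split.
  exists (enorm (M *m 0)), 0 => //=.
  rewrite /enorm big1 ?sqrtr0 ?ler01 // => i _; by rewrite mxE expr0n.
exists (Num.sqrt (\sum_(i < p) (\sum_(j < q) `|M i j|) ^+ 2)).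
move=> _ [x /= hx <-]; rewrite enormE ler_sqrt; last first.
  by apply: sumr_ge0 => i _; rewrite sqr_ge0.
apply: ler_sum => i _.
have c0 : 0 <= \sum_(j < q) `|M i j| by apply: sumr_ge0 => j _.
rewrite -[X in _ <= X]ger0_norm ?sqr_ge0 // -[X in X <= _]ger0_norm ?sqr_ge0 //.
rewrite !normrX; apply: lerXn2r; rewrite ?qualifE /= ?normr_ge0 ?c0 //.
rewrite mxE (le_trans (ler_norm_sum _ _ _)) // ger0_norm //.
apply: ler_sum => j _; rewrite normrM.
have := le_trans (coord_le x j) hx => hxj.
rewrite -[X in _ <= X]mulr1; apply: ler_wpM2l => //.
Qed.

Lemma spec_le p q (M : 'M[R]_(p, q)) v : enorm (M *m v) <= specnorm M * enorm v.
Proof.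
have [e0|epos] := eqVneq (enorm v) 0.
  rewrite e0 mulr0 (enorm0_eq e0) mulmx0.
  rewrite /enorm big1 ?sqrtr0 // => i _; by rewrite mxE expr0n.
have ep : 0 < enorm v by rewrite lt0r epos enorm_ge0.
set w := (enorm v)^-1 *: v.
have hw : enorm w = 1 by rewrite /w enormZ ger0_norm ?invr_ge0 ?enorm_ge0 // mulVf.
have hw1 : enorm w <= 1 by rewrite hw.
have := sup_upper_bound (spec_ub M) (ex_intro2 _ _ w hw1 erefl).
rewrite /w -scalemxAr enormZ ger0_norm ?invr_ge0 ?enorm_ge0 // -/(specnorm M).
by rewrite mulrC ler_pdivrMr.
Qed.

Lemma CdC p n (C : 'M[R]_(p, n)) Cd : \rank C = n -> is_MP_inverse C Cd -> Cd *m C = 1%:M.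
Proof.
move=> hr [h1 _ _ _].
have rf : row_free C^T by rewrite /row_free mxrank_tr hr.
apply: trmx_inj; apply: (row_free_inj rf).
by rewrite /= -trmx_mul mulmxA h1 trmx1 mul1mx.
Qed.

Lemma zl (V : zmodType) (a b c d : V) : a + b - c = (a - d) + (d + b - c).
Proof. by rewrite !addrA subrK. Qed.

Lemma Gmono (b : R) j k : 0 <= b -> (j <= k)%N -> \sum_(i < j) b ^+ i <= \sum_(i < k) b ^+ i.
Proof.
move=> b0 jk; rewrite (big_ord_widen k (fun i => b ^+ i) jk) big_mkcond /=.
apply: ler_sum => i _; case: ifP => // _; exact: exprn_ge0.
Qed.

Lemma GS (b : R) j : \sum_(i < j.+1) b ^+ i = 1 + b * \sum_(i < j) b ^+ i.
Proof. by rewrite big_ord_recl expr0 mulr_sumr; congr (_ + _); apply: eq_bigr => i _; rewrite exprS. Qed.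

End H.

Unset Implicit Arguments. Set Strict Implicit.
Theorem theorem3 (R : realType) (n m p N : nat)
  (B : 'M[R]_(n, m)) (C : 'M[R]_(p, n)) (Cd : 'M[R]_(n, p))
  (x0 : 'cV[R]_n) (r : nat -> 'cV[R]_p)
  (l1 l2 l3 : R) (f1 : 'M[R]_n -> R) (f2 : 'M[R]_(m, N) -> R) (f3 : R -> R)
  (omc beta : R) (S : set (dec R n m N)) :
  (0 < n)%N -> (0 < m)%N -> (0 < p)%N -> (0 < N)%N ->
  \rank C = n ->
  is_MP_inverse C Cd ->
  r 0%N = C *m x0 ->
  0 <= l1 -> 0 <= l2 -> 0 <= l3 ->
  0 < omc ->
  S `<=` [set z | z.2 = omc /\ 0 < z.2] ->
  0 < beta ->
  (forall z, AMOPUL_feas B C Cd r omc beta S z -> specnorm (C *m z.1.1 *m Cd) <= beta) ->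
  (forall z, AMOPUL_feas B C Cd r omc beta S z -> MOPUL_feas B C x0 r S z) /\
  (optval (objective l1 l2 l3 f1 f2 f3) (MOPUL_feas B C x0 r S)
     <= optval (objective l1 l2 l3 f1 f2 f3) (AMOPUL_feas B C Cd r omc beta S))%E.
Proof.
move=> _ _ _ N0 hrk hMP hr0 _ _ _ omc0 hSsub b0 hspec.
have feas : forall z, AMOPUL_feas B C Cd r omc beta S z -> MOPUL_feas B C x0 r S z.
  move=> [[A U] om] hF.
  have hs := hspec _ hF; rewrite /= in hs.
  move: hF => /= [hsum hS]; split => //.
  have [/= hom _] := hSsub _ hS.
  rewrite hom.
  set M := C *m A *m Cd in hs *.
  set E := fun t => enorm (C *m traj A B U x0 t - r t).
  set D := fun t => enorm (C *m A *m Cd *m r t.-1 + C *m B *m ucol U t.-1 - r t).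
  set G := fun j => \sum_(i < j) beta ^+ i.
  have hCdC := CdC hrk hMP.
  have E0 : E 0%N = 0.
    rewrite /E /= hr0 subrr /enorm big1 ?sqrtr0 // => i _; by rewrite mxE expr0n.
  have Ege0 : forall t, 0 <= E t by move=> t; exact: enorm_ge0.
  have Dge0 : forall t, 0 <= D t by move=> t; exact: enorm_ge0.
  have step : forall t, E t.+1 <= beta * E t + D t.+1.
    move=> t; rewrite /E /D /=.
    set x := traj A B U x0 t; set u := ucol U t.
    have hM : M *m (C *m x) = C *m (A *m x).
      by rewrite /M !mulmxA -(mulmxA _ Cd C) hCdC mulmx1.
    rewrite mulmxDr !mulmxA.
    rewrite (zl _ _ _ (M *m r t)) -/M.
    apply: le_trans (enormD _ _) _; apply: lerD => //.
    have h1 : C *m A *m x - M *m r t = M *m (C *m x - r t).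
      by rewrite mulmxBr hM mulmxA.
    rewrite h1; apply: le_trans (spec_le _ _) _.
    by apply: ler_wpM2r => //; exact: enorm_ge0.
  have Gge0 : forall j, 0 <= G j.
    by move=> j; apply: sumr_ge0 => i _; rewrite exprn_ge0 // ltW.
  have inv : forall T, (T <= N)%N ->
    \sum_(1 <= t < T.+1) E t + beta * G (N - T)%N * E T <= G N * \sum_(1 <= t < T.+1) D t.
    elim => [_|T IH hT].
      by rewrite !big_geq // E0 !mulr0 add0r.
    have IH' := IH (ltnW hT).
    rewrite !(big_nat_recr _ _ _ (ltn0Sn T)) /=.
    have hG : G (N - T)%N = 1 + beta * G (N - T.+1)%N.
      by rewrite /G -GS subnSK.
    have hGle : G (N - T)%N <= G N by apply: Gmono; rewrite ?leq_subr // ltW.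
    have s1 := step T.
    have p1 : G (N - T)%N * E T.+1 <= G (N - T)%N * (beta * E T + D T.+1).
      by apply: ler_wpM2l.
    have p2 : G (N - T)%N * D T.+1 <= G N * D T.+1 by apply: ler_wpM2r.
    rewrite hG in IH' p1 p2 hGle.
    have := Gge0 (N - T.+1)%N; have := Ege0 T.+1; have := Ege0 T.
    nra.
  have := inv N (leqnn N).
  rewrite subnn /G big_ord0 mulr0 mul0r addr0 -/(G N) => h.
  apply: (le_trans h).
  have Gpos : 0 < G N.
    apply: lt_le_trans (Gmono (ltW b0) N0); by rewrite /G big_ord1 expr0 ltr01.
  by rewrite -ler_pdivlMl // mulrC.
split => //.
apply: le_ereal_inf => _ [z hz <-]; exists z => //; exact: feas.
Qed.
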